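(* Let $n\geq3$ be odd. Let $\mathcal{Q}$ be the set of partitions $p$ of $\{1,\dots,n\}$ such that one block of $p$ has odd cardinality and all other blocks have cardinality $2$. For $p\in\mathcal{Q}$ let $\varepsilon''(p)=(-1)^{\frac12(|I|-1)}$, where $I$ is the odd block of $p$. Then $\sum_{p\in\mathcal{Q}}\varepsilon(p)\varepsilon''(p)=0$.
   Context: For an ordered partition $P=(I_1,\dots,I_k)$ of $\{1,\dots,n\}$ into nonempty blocks with $n_i=|I_i|$, $\sigma_P\in\mathfrak{S}_n$ is the unique permutation such that $\sigma_P^{-1}$ maps $\{n_1+\dots+n_i+1,\dots,n_1+\dots+n_{i+1}\}$ increasingly onto $I_{i+1}$, and $\varepsilon(P)=\mathrm{sgn}(\sigma_P)$. For a partition $p$ with at most one block of odd cardinality, $\varepsilon(P)$ does not depend on the ordering $P$ of the blocks of $p$, and this common value is $\varepsilon(p)$. *)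

(* Defs.v *)
(* The ground set {1,...,n} is modelled by 'I_n = {0,...,n-1}
   (order-preserving relabelling i |-> i+1). *)
From mathcomp Require Import all_boot all_order all_algebra all_fingroup.
Set Implicit Arguments. Unset Strict Implicit. Unset Printing Implicit Defensive.
Import GRing.Theory Num.Theory.
Local Open Scope ring_scope.

(* Position j
   (0-based) of this sequence is sigma_P^{-1}(j). *)
Definition ordpart_seq (n : nat) (P : seq {set 'I_n}) : seq 'I_n :=
  flatten [seq sort (fun x y : 'I_n => (x <= y)%N) (enum B) | B : {set 'I_n} <- P].

Definition sigmaP (n : nat) (P : seq {set 'I_n}) : option 'S_n :=
  [pick s : 'S_n | [forall j : 'I_n, (s^-1)%g j == nth j (ordpart_seq P) j]].

(* eps(P) = sgn(sigma_P) (as an integer); defaults to 1 if P is not an ordered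
   partition (never used in that case). *)
Definition epsP (n : nat) (P : seq {set 'I_n}) : int :=
  if sigmaP P is Some s then (-1) ^+ odd_perm s else 1.

(* eps(p) for an (unordered) partition p : the value of eps on an ordering of
   the blocks of p; we use the canonical enumeration order of the blocks.  For
   the partitions considered (at most one odd block) this is independent of
   the ordering, as stated in the paper. *)
Definition eps (n : nat) (p : {set {set 'I_n}}) : int := epsP (enum p).

Definition inQ (n : nat) (p : {set {set 'I_n}}) : bool :=
  partition p [set: 'I_n] &&
  [exists J in p, odd #|J| && [forall B in p, (B != J) ==> (#|B| == 2)%N]].

Definition eps2 (n : nat) (p : {set {set 'I_n}}) : int :=
  if [pick J in p | odd #|J|] is Some J then (-1) ^+ ((#|J|).-1./2) else 1.

(* Main.v *)
Require Import Defs.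
From mathcomp Require Import all_boot all_order all_algebra all_fingroup.
From mathcomp Require Import zify.
Set Implicit Arguments. Unset Strict Implicit. Unset Printing Implicit Defensive.
Import GRing.Theory Num.Theory.

Module P1.

Section Sign.
Variable n : nat.
Implicit Types (L : seq 'I_n) (s : 'S_n).

Definition rep L s := forall j : 'I_n, (s^-1)%g j = nth j L j.
Definition good L := perm_eq L (enum 'I_n).
Definition sgb L : bool :=
  if [pick s : 'S_n | [forall j : 'I_n, (s^-1)%g j == nth j L j]] is Some s
  then odd_perm s else false.

Lemma good_size L : good L -> size L = n.
Proof. by move/perm_size; rewrite size_enum_ord. Qed.

Lemma good_uniq L : good L -> uniq L.
Proof. by move/perm_uniq->; exact: enum_uniq. Qed.

Lemma good_perm L L' : good L -> perm_eq L L' -> good L'.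
Proof. by move=> gL pLL'; apply: perm_trans gL; rewrite perm_sym. Qed.

Lemma rep_exists L : good L -> exists s, rep L s.
Proof.
move=> gL; have sz := good_size gL; have u := good_uniq gL.
have inj : injective (fun j : 'I_n => nth j L j).
  move=> i j /eqP; rewrite (set_nth_default i j) ?sz ?ltn_ord //.
  by rewrite nth_uniq ?sz ?ltn_ord // => /eqP /ord_inj.
exists (perm inj)^-1%g => j; by rewrite invgK permE.
Qed.

Lemma rep_uniq L s s' : rep L s -> rep L s' -> s = s'.
Proof.
move=> h h'; apply: (@invg_inj _ s s'); apply/permP => j; by rewrite h h'.
Qed.

Lemma sgbE L s : rep L s -> sgb L = odd_perm s.
Proof.
rewrite /sgb => h; case: pickP => [s' /forallP H|H].
  by rewrite (@rep_uniq L s' s) // => j; apply/eqP.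
by have := H s; move/negP; case; apply/forallP => j; rewrite h.
Qed.

Lemma rep_pos L L' s (pi : 'S_n) : rep L s ->
  (forall i : 'I_n, nth i L' i = nth (pi i) L (pi i)) -> rep L' (s * pi^-1)%g.
Proof. by move=> h h' j; rewrite invMg invgK permM h h'. Qed.

Lemma sgb_map L a b : good L -> a != b ->
  sgb (map (tperm a b) L) = ~~ sgb L.
Proof.
move=> gL ab; have [s hs] := rep_exists gL.
have h : rep (map (tperm a b) L) (tperm a b * s)%g.
  move=> j; rewrite invMg tpermV permM hs (nth_map j) // good_size ?ltn_ord //.
by rewrite (sgbE h) (sgbE hs) odd_mul_tperm ab.
Qed.

Lemma good_swap X Y a b : good (X ++ a :: b :: Y) -> good (X ++ b :: a :: Y).
Proof.
move=> g; apply: (good_perm g); rewrite perm_cat2l.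
by rewrite (perm_catCA [::a] [::b] Y).
Qed.

Lemma sgb_swap X Y a b : good (X ++ a :: b :: Y) ->
  sgb (X ++ b :: a :: Y) = ~~ sgb (X ++ a :: b :: Y).
Proof.
move=> g; have [s hs] := rep_exists g.
have sz := good_size g; rewrite size_cat /= in sz.
have u := good_uniq g; rewrite cat_uniq /= in u.
have ab : a != b by move: u => /and3P[_ _ /andP[+ _]]; rewrite inE negb_or => /andP[].
have k0 : size X < n by move: sz; lia.
have k1 : (size X).+1 < n by move: sz; lia.
pose t := tperm (Ordinal k0) (Ordinal k1).
have h : rep (X ++ b :: a :: Y) (s * t^-1)%g.
  refine (rep_pos hs _) => i; rewrite /t.
  case: tpermP => [->|->|h1 h2] /=.
  - by rewrite !nth_cat ltnn subnn /= ltnNge leqnSn /= subSn // subnn.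
  - by rewrite !nth_cat ltnn subnn /= ltnNge leqnSn /= subSn // subnn.
  - rewrite !nth_cat; case: ltnP => // hi.
    have h1' : i != size X :> nat by apply/eqP => E; apply: h1; apply: ord_inj.
    have h2' : i != (size X).+1 :> nat by apply/eqP => E; apply: h2; apply: ord_inj.
    have -> : i - size X = (i - size X - 2).+2 by lia.
    by [].
rewrite (sgbE h) (sgbE hs) odd_permM odd_permV odd_tperm.
have -> : Ordinal k0 != Ordinal k1 by rewrite -val_eqE /= neq_ltn ltnSn.
by rewrite addbT.
Qed.

Lemma sgb_move1 B X c Y : good (X ++ B ++ c :: Y) ->
  sgb (X ++ c :: B ++ Y) = odd (size B) (+) sgb (X ++ B ++ c :: Y).
Proof.
elim: B X => [|b B IH] X g //=.
have g2 : good (X ++ b :: c :: B ++ Y).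
  apply: (good_perm g); rewrite perm_cat2l /= perm_cons.
  by rewrite (perm_catCA B [::c] Y).
rewrite sgb_swap // -cat_rcons IH ?cat_rcons //.
by rewrite addNb.
Qed.

Lemma sgb_block C X B Y : good (X ++ B ++ C ++ Y) ->
  sgb (X ++ C ++ B ++ Y) = odd (size B * size C) (+) sgb (X ++ B ++ C ++ Y).
Proof.
elim: C X => [|c C IH] X g /=; first by rewrite muln0.
have gm : good (X ++ c :: B ++ C ++ Y).
  by apply: (good_perm g); rewrite perm_cat2l /= (perm_catCA B [::c]).
rewrite -cat_rcons IH; last by rewrite cat_rcons.
rewrite cat_rcons (@sgb_move1 B X c (C ++ Y)) //.
by rewrite mulnS oddD addbA [odd (size B) (+) _]addbC.
Qed.
End Sign.

End P1.
Import P1.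

Module P2.

Section Blocks.
Variable n : nat.
Implicit Types (B A : {set 'I_n}) (P Q X Z : seq {set 'I_n}).
Definition leo := fun x y : 'I_n => (x <= y)%N.
Definition sortB (B : {set 'I_n}) := sort leo (enum B).
Lemma leo_total : total leo. Proof. by move=> x y; exact: leq_total. Qed.
Lemma leo_trans : transitive leo. Proof. by move=> x y z; exact: leq_trans. Qed.
Lemma leo_anti : antisymmetric leo.
Proof. by move=> x y /anti_leq /ord_inj. Qed.

Lemma size_sortB B : size (sortB B) = #|B|.
Proof. by rewrite size_sort cardE. Qed.

Lemma sortB_eq (A : {set 'I_n}) s : sorted leo s -> uniq s -> A =i s -> sortB A = s.
Proof.
move=> ss us As; apply: (sorted_eq leo_trans leo_anti) => //.
  exact: sort_sorted leo_total _.
rewrite perm_sort; apply: uniq_perm; rewrite ?enum_uniq // => x.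
by rewrite mem_enum.
Qed.

Definition oddcount (P : seq {set 'I_n}) := count (fun B : {set 'I_n} => odd #|B|) P.

Lemma ops_cons B P : ordpart_seq (B :: P) = sortB B ++ ordpart_seq P.
Proof. by []. Qed.
Lemma ops_cat P Q : ordpart_seq (P ++ Q) = ordpart_seq P ++ ordpart_seq Q.
Proof. by rewrite /ordpart_seq map_cat flatten_cat. Qed.

Lemma even_flat X : oddcount X = 0 -> ~~ odd (size (ordpart_seq X)).
Proof.
elim: X => [|A X IH] //=; rewrite ops_cons size_cat size_sortB oddD.
by case: (odd #|A|) => //= /IH ->.
Qed.

Lemma perm_blocks P' P W : perm_eq P P' -> oddcount P <= 1 ->
  good (W ++ ordpart_seq P) -> sgb (W ++ ordpart_seq P') = sgb (W ++ ordpart_seq P).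
Proof.
elim: P' P W => [|B P' IH] P W pP oc g.
  by move: pP => /perm_size /size0nil ->.
have hB : B \in P by rewrite (perm_mem pP) mem_head.
case/splitPr: hB pP oc g => X Z pP oc g.
have pXZ : perm_eq (X ++ Z) P'.
  by rewrite -(perm_cons B); apply: perm_trans pP; rewrite perm_sym (perm_catCA X [::B] Z).
have g1 : good ((W ++ sortB B) ++ ordpart_seq (X ++ Z)).
  apply: (good_perm g); rewrite ops_cat ops_cat ops_cons -!catA perm_cat2l.
  by rewrite perm_catCA.
have oc1 : oddcount (X ++ Z) <= 1.
  by move: oc; rewrite /oddcount !count_cat /=; lia.
rewrite ops_cons catA (IH _ _ pXZ oc1 g1) ops_cat -!catA.
rewrite ops_cat ops_cons in g *.
rewrite (@sgb_block _ (sortB B) W (ordpart_seq X) (ordpart_seq Z)) //.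
suff -> : odd (size (ordpart_seq X) * size (sortB B)) = false by [].
rewrite oddM size_sortB; case hB: (odd #|B|); last by rewrite andbF.
rewrite andbT; apply/negbTE/even_flat.
by move: oc; rewrite /oddcount !count_cat /= hB; lia.
Qed.

Lemma good_part (p : {set {set 'I_n}}) : partition p setT -> good (ordpart_seq (enum p)).
Proof.
move=> pp.
have mem : forall x, x \in ordpart_seq (enum p).
  move=> x; apply/flatten_mapP.
  have : x \in cover p by rewrite (cover_partition pp) inE.
  case/bigcupP => B Bp xB; exists B; first by rewrite mem_enum.
  by rewrite mem_sort mem_enum.
have sz : size (ordpart_seq (enum p)) = n.
  rewrite size_flatten /shape -map_comp sumnE big_map big_enum /=.
  transitivity (\sum_(B in p) #|B|).
    by apply: eq_bigr => B _; rewrite /= size_sortB.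
  by rewrite -(card_partition pp) cardsT card_ord.
have u : uniq (ordpart_seq (enum p)).
  apply: (@leq_size_uniq _ (enum 'I_n)); rewrite ?enum_uniq //.
  by rewrite size_enum_ord sz.
by rewrite /good; apply: uniq_perm; rewrite ?enum_uniq // => x; rewrite (mem x) mem_enum.
Qed.

Lemma epsP_sgb (P : seq {set 'I_n}) : epsP P = ((-1) ^+ sgb (ordpart_seq P))%R.
Proof. by rewrite /epsP /sigmaP /sgb; case: pickP. Qed.

End Blocks.

End P2.
Import P2.

Module P3.

Section Main.
Variable m : nat.
Local Notation N := m.+2.
Implicit Types (p q : {set {set 'I_N}}) (A B J : {set 'I_N}).

Definition o0 : 'I_N := ord0.
Definition o1 : 'I_N := @Ordinal N 1 isT.
Definition K : {set 'I_N} := [set o0; o1].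
Definition tau : 'S_N := tperm o0 o1.
Definition same p := [exists B in p, (o0 \in B) && (o1 \in B)].
Definition oddblk p := [pick J in p | odd #|J|].
Definition timg p := [set tau @: (B : {set 'I_N}) | B in p].
Definition mergeOp p J := (J :|: K) |: (p :\ K :\ J).
Definition splitOp p J := K |: ((J :\: K) |: (p :\ J)).

Lemma o01 : o0 != o1. Proof. by rewrite -val_eqE. Qed.
Lemma cardK : #|K| = 2. Proof. by rewrite cards2 o01. Qed.
Lemma o0K : o0 \in K. Proof. by rewrite !inE eqxx. Qed.
Lemma o1K : o1 \in K. Proof. by rewrite !inE eqxx orbT. Qed.

Lemma inQP p : inQ p -> partition p setT /\
  exists J, [/\ J \in p, odd #|J| & forall B, B \in p -> B != J -> #|B| = 2].
Proof.
case/andP => pp /existsP [J /and3P [Jp oJ /forallP H]]; split => //.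
exists J; split => // B Bp BJ; have := H B; rewrite Bp BJ /= => /eqP //.
Qed.

Lemma inQ_intro p J : partition p setT -> J \in p -> odd #|J| ->
  (forall B, B \in p -> B != J -> #|B| = 2) -> inQ p.
Proof.
move=> pp Jp oJ H; rewrite /inQ pp /=; apply/existsP; exists J.
rewrite Jp oJ /=; apply/forallP => B; apply/implyP => Bp; apply/implyP => BJ.
by rewrite H.
Qed.

Lemma inQ_odd p J : inQ p -> J \in p -> odd #|J| ->
  forall B, B \in p -> B != J -> #|B| = 2.
Proof.
move=> /inQP [pp [J' [J'p oJ' H]]] Jp oJ.
have EJ : J = J'.
  by apply/eqP; apply: contraT => /(H _ Jp) E; move: oJ; rewrite E.
by rewrite EJ.
Qed.

Lemma odd_uniq p J B : inQ p -> J \in p -> odd #|J| -> B \in p -> odd #|B| -> B = J.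
Proof.
move=> Q Jp oJ Bp oB; apply/eqP; apply: contraT => /(inQ_odd Q Jp oJ Bp) E.
by move: oB; rewrite E.
Qed.

Lemma oddblkE p J : inQ p -> J \in p -> odd #|J| -> oddblk p = Some J.
Proof.
move=> Q Jp oJ; rewrite /oddblk; case: pickP => [B /andP [Bp oB]|H].
  by rewrite (odd_uniq Q Jp oJ Bp oB).
by move: (H J); rewrite Jp oJ.
Qed.

Lemma eps2E p J : oddblk p = Some J -> eps2 p = ((-1) ^+ ((#|J|).-1./2))%R.
Proof. by rewrite /eps2 /oddblk => ->. Qed.

Lemma eps_perm p P : inQ p -> perm_eq P (enum p) ->
  eps p = ((-1) ^+ sgb (ordpart_seq P))%R.
Proof.
move=> Q pP; have [pp [J [Jp oJ H]]] := inQP Q.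
rewrite /eps epsP_sgb.
have := @perm_blocks _ P (enum p) [::]; rewrite /= => -> //.
- by rewrite perm_sym.
- rewrite /oddcount (@eq_in_count _ _ (pred1 J)).
    by rewrite count_uniq_mem ?enum_uniq // leq_b1.
  move=> B; rewrite mem_enum => Bp /=.
  case: (eqVneq B J) => [->|BJ] //; by rewrite H.
- exact: good_part.
Qed.

End Main.

End P3.
Import P3.

Module P4.

Section Main2.
Variable m : nat.
Local Notation N := m.+2.
Local Notation o0 := (@o0 m).
Local Notation o1 := (@o1 m).
Local Notation K := (@K m).
Local Notation tau := (@tau m).
Local Notation o01 := (@o01 m).
Local Notation cardK := (@cardK m).
Local Notation o0K := (@o0K m).
Local Notation o1K := (@o1K m).
Implicit Types (p q : {set {set 'I_N}}) (A B J : {set 'I_N}).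

Lemma val_o0 (x : 'I_N) : (x == o0) = (val x == 0). Proof. by rewrite -val_eqE. Qed.
Lemma val_o1 (x : 'I_N) : (x == o1) = (val x == 1). Proof. by rewrite -val_eqE. Qed.

Lemma setUDK (T : finType) (A B : {set T}) : [disjoint A & B] -> (A :|: B) :\: B = A.
Proof.
move=> d; apply/setP => x; rewrite !inE; case xB: (x \in B); rewrite ?andbF ?andbT ?orbF //.
by rewrite (disjointFl d xB).
Qed.

Lemma sameK p : K \in p -> same p.
Proof. by move=> Kp; apply/existsP; exists K; rewrite Kp o0K o1K. Qed.

Lemma sortBK : sortB K = [:: o0; o1].
Proof.
apply: sortB_eq => [//||x]; last by rewrite !inE.
by [].
Qed.

Lemma sortBJK J : o0 \notin J -> o1 \notin J -> sortB (J :|: K) = o0 :: o1 :: sortB J.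
Proof.
move=> n0 n1; apply: sortB_eq.
- rewrite /=.
  rewrite path_min_sorted; first exact: (sort_sorted (@leo_total N)).
  apply/allP => x; rewrite mem_sort mem_enum => xJ.
  have h0 : x != o0 by apply: contraNneq n0 => <-.
  have h1 : x != o1 by apply: contraNneq n1 => <-.
  move: h0 h1; rewrite val_o0 val_o1 /leo /=; lia.
- rewrite /= inE !mem_sort !mem_enum (negPf n0) (negPf n1) o01 /=.
  by rewrite sort_uniq enum_uniq.
- move=> x; rewrite !inE mem_sort mem_enum.
  by case: (x \in J); case: (x == o0); case: (x == o1).
Qed.

Lemma half_step c : odd c -> ((c + 2).-1./2) = (c.-1./2).+1.
Proof. by case: c => // c _; rewrite addn2. Qed.

Lemma merge_case p J : inQ p -> K \in p -> J \in p -> odd #|J| ->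
  [/\ inQ (mergeOp p J), oddblk (mergeOp p J) = Some (J :|: K),
      K \notin mergeOp p J, splitOp (mergeOp p J) (J :|: K) = p
      & eps (mergeOp p J) = eps p /\ eps2 (mergeOp p J) = (- eps2 p)%R].
Proof.
move=> Q Kp Jp oJ; have [pp _] := inQP Q.
have JK : J != K by apply: contraTneq oJ => ->; rewrite cardK.
have dJK : [disjoint J & K].
  by have /trivIsetP := partition_trivIset pp; apply.
have n0 : o0 \notin J by rewrite (disjointFl dJK o0K).
have n1 : o1 \notin J by rewrite (disjointFl dJK o1K).
have cJK : #|J :|: K| = (#|J| + 2)%N.
  rewrite cardsU cardK; move: dJK; rewrite -setI_eq0 => /eqP ->; rewrite cards0; lia.
have oJK : odd #|J :|: K| by rewrite cJK addn2 /= negbK.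
have JKp : J :|: K \notin p.
  apply/negP => /(odd_uniq Q Jp oJ) /(_ oJK) E.
  by move: n0; rewrite -E inE o0K orbT.
set R := p :\ K :\ J.
have RJK : J :|: K \notin R by rewrite !inE negb_and negb_and JKp !orbT.
have Q' : inQ (mergeOp p J).
  have p1 := partitionD1 pp Kp.
  have JpK : J \in p :\ K by rewrite !inE JK Jp.
  have p2 := partitionD1 p1 JpK.
  have p3 := partitionU1 p2 (_ : J :|: K != set0) (_ : [disjoint J :|: K & setT :\: K :\: J]).
  apply: (@inQ_intro _ _ (J :|: K)) => //.
  - have -> : setT = (J :|: K) :|: (setT :\: K :\: J).
      by apply/setP => x; rewrite !inE; case: (x \in J); case: (x == o0); case: (x == o1).
    apply: p3; first by apply/set0Pn; exists o0; rewrite inE o0K orbT.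
    by apply/pred0P => x /=; rewrite !inE; case: (x \in J); case: (x == o0); case: (x == o1).
  - by rewrite /mergeOp setU11.
  - move=> B; rewrite /mergeOp !inE => /orP [->//|/and3P [BJ BK Bp]] _.
    exact: (inQ_odd Q Jp oJ Bp BJ).
have ob : oddblk (mergeOp p J) = Some (J :|: K).
  by apply: oddblkE => //; rewrite /mergeOp setU11.
have KR : K \notin mergeOp p J.
  rewrite /mergeOp in_setU1 negb_or; apply/andP; split.
    apply/eqP => E; move: cJK; rewrite -E cardK => h.
    by move: oJ; have -> : #|J| = 0 by lia.
  by rewrite !in_setD1 eqxx andbF.
have JKK : (J :|: K) :\: K = J.
  exact: setUDK.
have sp : splitOp (mergeOp p J) (J :|: K) = p.
  rewrite /splitOp /mergeOp setU1K // JKK /R; apply/setP => B; rewrite !inE.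
  case: (eqVneq B K) => [->|BK] //=; case: (eqVneq B J) => [->|BJ] //=.
split => //; split.
- set R' := enum R.
  have u1 : perm_eq (K :: J :: R') (enum p).
    apply: uniq_perm; rewrite ?enum_uniq //=.
      by rewrite !inE negb_or eq_sym JK /R' !mem_enum !inE !eqxx /= andbF enum_uniq.
    move=> B; rewrite !inE /R' !mem_enum !inE.
    case: (eqVneq B K) => [->|BK] //=; case: (eqVneq B J) => [->|BJ] //=.
  have u2 : perm_eq ((J :|: K) :: R') (enum (mergeOp p J)).
    apply: uniq_perm; rewrite ?enum_uniq //.
      by rewrite /= /R' mem_enum RJK enum_uniq.
    by move=> B; rewrite !inE !mem_enum /mergeOp !inE.
  rewrite (eps_perm Q u1) (eps_perm Q' u2) !ops_cons sortBJK // sortBK.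
  by [].
- rewrite (eps2E ob) (eps2E (oddblkE Q Jp oJ)) cJK half_step // exprS.
  by rewrite mulN1r.
Qed.

End Main2.

End P4.
Import P4.

Module P5.

Section G.
Variable T : finType.
Implicit Types A C : {set T}.
Lemma G1 A C : A \subset C -> A :|: ((C :\: A) :|: (setT :\: C)) = setT.
Proof.
move=> h; apply/setP => x; rewrite !inE; case xA: (x \in A) => //=.
by case: (x \in C).
Qed.
Lemma G2 A C : [disjoint C :\: A & setT :\: C].
Proof. by apply/pred0P => x /=; rewrite !inE; case: (x \in C); rewrite ?andbF. Qed.
Lemma G3 A C : A \subset C -> [disjoint A & (C :\: A) :|: (setT :\: C)].
Proof.
move=> h; apply/pred0P => x /=; rewrite !inE; case xA: (x \in A) => //=.
by rewrite (subsetP h x xA).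
Qed.
Lemma G4 A C : A \subset C -> (C :\: A) :|: A = C.
Proof.
move=> h; apply/setP => x; rewrite !inE; case xA: (x \in A); rewrite ?orbT ?orbF //=.
by rewrite (subsetP h x xA).
Qed.
End G.

Section Main3.
Variable m : nat.
Local Notation N := m.+2.
Local Notation o0 := (@o0 m).
Local Notation o1 := (@o1 m).
Local Notation K := (@K m).
Local Notation tau := (@tau m).
Local Notation o01 := (@o01 m).
Local Notation cardK := (@cardK m).
Local Notation o0K := (@o0K m).
Local Notation o1K := (@o1K m).
Implicit Types (p q : {set {set 'I_N}}) (A B J : {set 'I_N}).

Lemma split_case p J : inQ p -> same p -> K \notin p -> J \in p -> odd #|J| ->
  [/\ inQ (splitOp p J), K \in splitOp p J, (J :\: K) \in splitOp p J,
      odd #|J :\: K| & mergeOp (splitOp p J) (J :\: K) = p].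
Proof.
move=> Q /existsP [B /andP [Bp /andP [b0 b1]]] nK Jp oJ.
have [pp _] := inQP Q.
have KB : K \subset B by apply/subsetP => x; rewrite !inE => /orP [] /eqP ->.
have BJ : B = J.
  apply/eqP; apply: contraT => /(inQ_odd Q Jp oJ Bp) cB.
  have : K == B by rewrite eqEcard KB cB cardK.
  by move/eqP => E; move: nK; rewrite E Bp.
subst B.
have cJ2 : 2 <= #|J| by rewrite -cardK subset_leq_card.
have cJ' : #|J :\: K| = (#|J| - 2)%N by rewrite cardsD (setIidPr KB) cardK.
have oJ' : odd #|J :\: K|.
  have E : #|J| = (#|J| - 2).+2 by lia.
  by rewrite cJ'; move: oJ; rewrite {1}E /= negbK.
have J'0 : J :\: K != set0 by rewrite -card_gt0; move: oJ'; case: #|J :\: K|.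
have n0 : o0 \notin J :\: K by rewrite in_setD o0K.
have K0 : K != set0 by apply/set0Pn; exists o0; exact: o0K.
have p1 := partitionD1 pp Jp.
have p2 := partitionU1 p1 J'0 (G2 K J).
have p3 := partitionU1 p2 K0 (G3 KB).
rewrite (G1 KB) in p3.
have KJ' : K != J :\: K by apply: contraNneq n0 => <-; exact: o0K.
have J'p : J :\: K \notin p :\ J.
  apply/negP => /setD1P [h1 h2]; have := odd_uniq Q Jp oJ h2 oJ'.
  by move=> E; move: n0; rewrite E b0.
have Q' : inQ (splitOp p J).
  apply: (inQ_intro p3 (_ : J :\: K \in _) oJ').
    by rewrite /splitOp !in_setU1 eqxx orbT.
  move=> C; rewrite /splitOp !in_setU1 => /or3P [/eqP ->|/eqP ->|Cp] CJ.
  - exact: cardK.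
  - by rewrite eqxx in CJ.
  - by move/setD1P: Cp => [h1 h2]; exact: (inQ_odd Q Jp oJ h2 h1).
split => //.
- by rewrite /splitOp in_setU1 eqxx.
- by rewrite /splitOp !in_setU1 eqxx orbT.
rewrite /mergeOp /splitOp (G4 KB) setU1K; last first.
  by rewrite in_setU1 negb_or KJ' /= in_setD1 negb_and nK orbT.
by rewrite setU1K // setD1K.
Qed.

Lemma tauK : involutive tau. Proof. exact: tpermK. Qed.

Lemma mem_tau B x : (x \in tau @: B) = (tau x \in B).
Proof. by rewrite -{1}[x]tauK mem_imset //; exact: perm_inj. Qed.

Lemma tau_val x : nat_of_ord (tau x) = if nat_of_ord x == 0 then 1 else if nat_of_ord x == 1 then 0 else nat_of_ord x.
Proof.
rewrite /P3.tau; case: tpermP => [->|->|h0 h1] //=.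
have -> : (val x == 0) = false by rewrite -val_o0; apply/eqP.
by have -> : (val x == 1) = false by rewrite -val_o1; apply/eqP.
Qed.

Lemma sortB_tau B : ~~ ((o0 \in B) && (o1 \in B)) ->
  sortB (tau @: B) = map tau (sortB B).
Proof.
move=> nb; apply: sortB_eq.
- rewrite sorted_map.
  apply: (@sub_in_sorted _ (mem B) (@leo N)) => [x y xB yB||].
  + have H : forall a b, a \in B -> b \in B -> nat_of_ord a = 0 -> nat_of_ord b = 1 -> False.
      move=> a b aB bB a0 b1; move/negP: nb; apply.
      have -> : o0 = a by apply: ord_inj.
      have -> : o1 = b by apply: ord_inj.
      by rewrite aB bB.
    have := H x y xB yB; have := H y x yB xB.
    rewrite /leo /= !tau_val.
    case: (nat_of_ord x =P 0) => ?; case: (nat_of_ord x =P 1) => ?;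
    case: (nat_of_ord y =P 0) => ?; case: (nat_of_ord y =P 1) => ? /=; lia.
  + by apply/allP => x; rewrite mem_sort mem_enum.
  + exact: (sort_sorted (@leo_total N)).
- by rewrite (map_inj_uniq perm_inj) sort_uniq enum_uniq.
- move=> x; rewrite mem_tau -{2}[x]tauK mem_map ?mem_sort ?mem_enum //.
  exact: perm_inj.
Qed.

Lemma ops_tau (P : seq {set 'I_N}) :
  all (fun B => ~~ ((o0 \in B) && (o1 \in B))) P ->
  ordpart_seq [seq tau @: B | B <- P] = map tau (ordpart_seq P).
Proof.
elim: P => [|B P IH] //= /andP [h1 h2].
by rewrite !ops_cons map_cat sortB_tau // IH.
Qed.

End Main3.

End P5.
Import P5.

Module P6.

Section Main4.
Variable m : nat.
Local Notation N := m.+2.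
Local Notation o0 := (@o0 m).
Local Notation o1 := (@o1 m).
Local Notation K := (@K m).
Local Notation tau := (@tau m).
Local Notation o01 := (@o01 m).
Local Notation cardK := (@cardK m).
Local Notation o0K := (@o0K m).
Local Notation o1K := (@o1K m).
Implicit Types (p q : {set {set 'I_N}}) (A B J : {set 'I_N}).

Lemma tau_case p : inQ p -> ~~ same p ->
  [/\ inQ (timg p), ~~ same (timg p), timg (timg p) = p,
      eps (timg p) = (- eps p)%R & eps2 (timg p) = eps2 p].
Proof.
move=> Q ns; have [pp [J [Jp oJ H]]] := inQP Q.
have tT : tau @: setT = setT :> {set 'I_N}.
  by apply/setP => x; rewrite mem_tau !inE.
have pq : partition (timg p) setT.
  by rewrite -tT /timg imset_partition //; exact: perm_inj.
have cJ : #|tau @: J| = #|J| by rewrite card_imset //; exact: perm_inj.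
have Jq : tau @: J \in timg p by apply: imset_f.
have oJ' : odd #|tau @: J| by rewrite cJ.
have Q' : inQ (timg p).
  apply: (inQ_intro pq Jq oJ') => C /imsetP [B Bp ->] BJ.
  rewrite card_imset; last exact: perm_inj.
  by apply: H => //; apply: contraNneq BJ => ->.
split => //.
- apply/existsP => [[C /andP [/imsetP [B Bp ->] /andP [h0 h1]]]].
  rewrite !mem_tau /P3.tau tpermL tpermR in h0 h1.
  by move/existsP: ns; apply; exists B; rewrite Bp h0 h1.
- rewrite /timg -imset_comp (@eq_imset _ _ _ id) ?imset_id //.
  by move=> B /=; apply/setP => x; rewrite !mem_tau tauK.
- have pe : perm_eq [seq tau @: B | B <- enum p] (enum (timg p)).
    apply: uniq_perm; rewrite ?enum_uniq //.
      by rewrite (map_inj_uniq (imset_inj (@perm_inj _ tau))) enum_uniq.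
    move=> C; rewrite mem_enum; apply/mapP/imsetP => [] [B].
      by rewrite mem_enum => Bp ->; exists B.
    by move=> Bp ->; exists B; rewrite ?mem_enum.
  rewrite (eps_perm Q' pe) (@eps_perm _ p (enum p) Q (perm_refl _)).
  rewrite ops_tau; last first.
    apply/allP => B; rewrite mem_enum => Bp; apply/negP => /andP [h0 h1].
    by move/existsP: ns; apply; exists B; rewrite Bp h0 h1.
  rewrite /P3.tau sgb_map ?o01 //; last exact: good_part.
  by case: (sgb _); rewrite /= ?expr0 ?expr1 ?opprK.
- by rewrite (eps2E (oddblkE Q' Jq oJ')) (eps2E (oddblkE Q Jp oJ)) cJ.
Qed.

Definition fp p :=
  if same p then
    (if oddblk p is Some J then (if K \in p then mergeOp p J else splitOp p J) else p)
  else timg p.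

Lemma fp_main p : inQ p ->
  [/\ inQ (fp p), fp (fp p) = p & (eps (fp p) * eps2 (fp p) = - (eps p * eps2 p))%R].
Proof.
move=> Q; have [pp [J [Jp oJ H]]] := inQP Q.
have ob := oddblkE Q Jp oJ.
rewrite /fp; case sp: (same p); last first.
  have [Q' ns' tt e1 e2] := tau_case Q (negbT sp).
  by rewrite (negbTE ns') tt e1 e2 mulNr.
rewrite ob; case Kp: (K \in p).
  have [Q' ob' nK sp' [e1 e2]] := merge_case Q Kp Jp oJ.
  have sq : same (mergeOp p J).
    apply/existsP; exists (J :|: K).
    by rewrite /mergeOp setU11 /= in_setU o0K orbT /= in_setU o1K orbT.
  by rewrite sq ob' (negbTE nK) sp' e1 e2 mulrN.
have [Q' Kq J'q oJ' me] := split_case Q sp (negbT Kp) Jp oJ.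
have [_ _ _ _ [e1 e2]] := merge_case Q' Kq J'q oJ'.
rewrite me in e1 e2.
rewrite sameK // (oddblkE Q' J'q oJ') Kq me; split => //.
by rewrite -e1 e2 mulrN opprK.
Qed.

End Main4.

End P6.
Import P6.

Local Open Scope ring_scope.

Section Final.
Variable m : nat.
Local Notation N := m.+2.

Definition ff (p : {set {set 'I_N}}) := if inQ p then fp p else p.

Lemma ff_inv : involutive ff.
Proof.
move=> p; rewrite /ff; case Q: (inQ p); last by rewrite Q.
by have [Q' fpp _] := fp_main Q; rewrite Q' fpp.
Qed.

Lemma sum_zero : \sum_(p : {set {set 'I_N}} | inQ p) eps p * eps2 p = 0 :> int.
Proof.
set S := (X in X = _).
have E : S = - S.
  rewrite {1}/S (reindex_inj (inv_inj ff_inv)) /= /S -sumrN.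
  rewrite (@eq_bigl _ _ _ _ _ _ (fun p => inQ p)); last first.
    move=> p; rewrite /ff; case Q: (inQ p); last by rewrite Q.
    by have [Q' _ _] := fp_main Q; rewrite Q'.
  apply: eq_bigr => p Q; rewrite /ff Q.
  by have [_ _ ->] := fp_main Q.
move/eqP: E; rewrite -subr_eq0 opprK -mulr2n mulrn_eq0 /= => /eqP //.
Qed.
End Final.

Theorem mainTheorem11 (n : nat) (hn3 : (3 <= n)%N) (hodd : odd n) :
  \sum_(p : {set {set 'I_n}} | inQ p) eps p * eps2 p = 0 :> int.
Proof. by case: n hn3 hodd => [|[|m]] // _ _; exact: sum_zero. Qed.
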